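(* Let $A$ be an invertible integral $g\times g$ matrix such that \[A^t=\begin{pmatrix}\mathrm{Id}_{g-k} & Y\\ 0 & Z\end{pmatrix}\] where $Z$ is an integral $k\times k$ matrix with $Z-\mathrm{Id}$ injective and $Y$ is an integral $(g-k)\times k$ matrix. Then there is an integral $g\times g$ matrix $B$ such that \[\operatorname{im}(A-\mathrm{Id})+B\big(\ker((A^t)^{-1}-\mathrm{Id})\big)=\mathbb{Q}^g\] and $B^t(A^t)^{-1}=A^{-1}B$.
   Context: Here $A$, $B$ act on $\mathbb{Q}^g$ (column vectors); $\operatorname{im}$ and $\ker$ are taken over $\mathbb{Q}$. In the application, $\mathbb{Q}^g$ is the Lagrangian $L=\ker(H_1(\partial V_g;\mathbb{Q})\to H_1(V_g;\mathbb{Q}))$ with basis given by meridian classes. *)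

(* Defs.v *)
From HB Require Import structures.
From mathcomp Require Import all_boot all_order all_algebra.
Set Implicit Arguments. Unset Strict Implicit. Unset Printing Implicit Defensive.
Import Order.TTheory GRing.Theory Num.Theory.
Local Open Scope ring_scope.

Definition ratmx (m n : nat) (M : 'M[int]_(m, n)) : 'M[rat]_(m, n) :=
  map_mx (fun z : int => z%:~R) M.

(* Main.v *)
Require Import Defs.
From HB Require Import structures.
From mathcomp Require Import all_boot all_order all_algebra.
Import Order.TTheory GRing.Theory Num.Theory.
Local Open Scope ring_scope.

Lemma ratmx1 n : ratmx (1%:M : 'M[int]_n) = 1%:M.
Proof. exact: map_mx1. Qed.

Theorem mainTheorem5 (m k : nat) (A : 'M[int]_(m + k))
    (Y : 'M[int]_(m, k)) (Z : 'M[int]_k) :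
  A \in unitmx ->
  A^T = block_mx 1%:M Y 0 Z ->
  (forall v : 'cV[rat]_k, (ratmx Z - 1%:M) *m v = 0 -> v = 0) ->
  exists B : 'M[int]_(m + k),
    (forall w : 'cV[rat]_(m + k),
       exists (u v : 'cV[rat]_(m + k)),
         (invmx (ratmx A)^T - 1%:M) *m v = 0 /\
         w = (ratmx A - 1%:M) *m u + ratmx B *m v) /\
    (ratmx B)^T *m invmx (ratmx A)^T = invmx (ratmx A) *m ratmx B.
Proof.
move=> uAi hA hZ.
set y := ratmx Y; set z := ratmx Z.
have hA' : ratmx A = block_mx 1%:M 0 y^T z^T.
  have -> : A = (block_mx 1%:M Y 0 Z)^T by rewrite -hA trmxK.
  rewrite tr_block_mx /ratmx map_block_mx !map_trmx trmx1 trmx0.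
  by congr block_mx; [exact: map_mx1 | exact: map_mx0].
have uA : ratmx A \in unitmx.
  rewrite unitmxE /ratmx det_map_mx; apply: rmorph_unit; by rewrite -unitmxE.
have hz : (z - 1%:M)^T \in unitmx.
  rewrite unitmxE unitfE; apply/negP => /det0P [v nz vM].
  move/negP: nz; apply; apply/eqP.
  have : (z - 1%:M) *m v^T = 0 by rewrite -(trmxK (z - 1%:M)) -trmx_mul vM trmx0.
  by move/hZ => /(congr1 trmx); rewrite trmxK trmx0.
exists (block_mx 1%:M (0 : 'M[int]_(m, k)) Y^T 0).
have hB : ratmx (block_mx 1%:M (0 : 'M[int]_(m, k)) Y^T 0) = block_mx 1%:M (0 : 'M[rat]_(m, k)) y^T 0.
  rewrite /ratmx. rewrite map_block_mx map_trmx.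
  by congr block_mx; [exact: map_mx1 | exact: map_mx0 | exact: map_mx0].
rewrite hB.
split.
  move=> w.
  set w1 := usubmx w; set w2 := dsubmx w.
  set c := invmx (z - 1%:M)^T *m (w2 - y^T *m w1).
  exists (col_mx 0 c), (col_mx w1 0).
  split.
    have Hv : (ratmx A)^T *m col_mx w1 0 = col_mx w1 0.
      rewrite hA' tr_block_mx trmxK trmx0 trmx1 mul_block_col mul1mx !mulmx0 mul0mx addr0. by rewrite addr0.
    by rewrite mulmxBl mul1mx -{1}Hv mulKmx ?unitmx_tr // subrr.
  have Hc : (z - 1%:M)^T *m c = w2 - y^T *m w1 by rewrite mulKVmx.
  rewrite linearB /= trmx1 mulmxBl mul1mx in Hc.
  rewrite hA' mulmxBl mul1mx !mul_block_col opp_col_mx !add_col_mx.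
  rewrite -[w in LHS](vsubmxK w) -/w1 -/w2.
  rewrite !mul1mx !mulmx0 !mul0mx subr0 !addr0 !add0r.
  congr col_mx.
  by rewrite Hc subrK.
have sym : ratmx A *m (block_mx 1%:M (0 : 'M[rat]_(m, k)) y^T 0)^T = block_mx 1%:M (0 : 'M[rat]_(m, k)) y^T 0 *m (ratmx A)^T.
  rewrite hA' !tr_block_mx !mulmx_block !trmxK !trmx0 !trmx1.
  by rewrite !mulmx1 !mul0mx !mulmx0 !addr0 !mul1mx.
have -> : (block_mx 1%:M (0 : 'M[rat]_(m, k)) y^T 0)^T =
   invmx (ratmx A) *m (block_mx 1%:M (0 : 'M[rat]_(m, k)) y^T 0 *m (ratmx A)^T) by rewrite -sym mulKmx.
have uAt : (ratmx A)^T \in unitmx by rewrite unitmx_tr.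
by rewrite -!mulmxA (mulmxV uAt) mulmx1.
Qed.
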